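(* Let $p,k\ge 1$ be integers, let $a_1,\dots,a_k\in\mathbb{R}$, and let $\mathbf{f}:\mathbb{R}^p\to\mathbb{R}^p$ be a differentiable flux. Let $\mathbb{M}_1,\dots,\mathbb{M}_k:\mathbb{R}^p\to\mathbb{R}^p$ be differentiable maps satisfying, for all $\mathbf{u}$, $\sum_{i=1}^k \mathbb{M}_i(\mathbf{u})=\mathbf{u}$ and $\sum_{i=1}^k a_i\mathbb{M}_i(\mathbf{u})=\mathbf{f}(\mathbf{u})$, and set $\mathbf{m}_2(\mathbf{u})=\sum_{i=1}^k a_i^2\mathbb{M}_i(\mathbf{u})$. Fix $\mathbf{u}$ and suppose there exists a strictly convex entropy $\eta(\mathbf{u})$ with Hessian matrix $\mathbf{A}_0$ such that (1) $\mathbf{A}_0\mathbf{f}'(\mathbf{u})$ is symmetric, (2) $\mathbf{A}_0\mathbb{M}_i'(\mathbf{u})$ is symmetric positive definite for all $i$, and (3) $\min_i|a_i|>\rho(\mathbf{f}'(\mathbf{u}))$ (spectral radius). Let $\mathbf{D}=\mathbf{D}(\mathbf{u})$ be a $p\times p$ matrix and assume that $\mathbf{D}\mathbf{A}_0^{-1}$ is symmetric and has positive eigenvalues. Let $\varepsilon>0$, $\omega>0$, and define the $p\times p$ matrix $\varepsilon\tilde{\Omega}^{-1}$ by $$\varepsilon\,\omega\,\tilde{\Omega}^{-1}=\mathbf{D}(\mathbf{u})\left[\mathbf{m}_2'(\mathbf{u})-(\mathbf{f}'(\mathbf{u}))^2\right]^{-1}.$$ Then $\varepsilon\tilde{\Omega}^{-1}$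 has real non-negative eigenvalues.
   Context: Primes denote Jacobian matrices with respect to $\mathbf{u}$. Here $\mathbf{D}$ is the diffusion matrix of the target convection-diffusion system $\partial_t\mathbf{u}+\partial_x\mathbf{f}(\mathbf{u})=\partial_x(\mathbf{D}\partial_x\mathbf{u})$, $\tilde{\Omega}$ is the block of the collision matrix $\Omega=\mathbf{I}_k\otimes\tilde{\Omega}$ of the kinetic model, $\varepsilon$ is the Knudsen number and $\omega=\ell/\|\Lambda\|$ with $\ell$ a characteristic length. Under the stated hypotheses $\mathbf{m}_2'(\mathbf{u})-(\mathbf{f}'(\mathbf{u}))^2$ is invertible, so the defining relation makes sense. *)

(* Defs.v *)
From mathcomp Require Import all_boot all_algebra.
From mathcomp Require Import all_classical all_reals all_analysis.
From mathcomp Require Export complex.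
Import GRing.Theory Num.Theory.
Set Implicit Arguments. Unset Strict Implicit. Unset Printing Implicit Defensive.
Local Open Scope ring_scope.

(* Usual Jacobian matrix f'(u) (rows = components of f, columns = variables).
   MathComp-Analysis' [jacobian] acts on row vectors by right multiplication
   ('D_v f u = v *m jacobian f u), so it is the transpose of the usual one. *)
Definition Jac (R : realType) (n : nat) (f : 'rV[R]_n -> 'rV[R]_n) (u : 'rV[R]_n)
  : 'M[R]_n := (jacobian f u)^T.

Definition cplx_mx (R : realType) (n : nat) (A : 'M[R]_n) : 'M[R[i]]_n :=
  map_mx (fun x : R => (x%:C)%C) A.

Definition spd (R : realType) (n : nat) (A : 'M[R]_n) : Prop :=
  A^T = A /\ forall v : 'rV[R]_n, v != 0 -> 0 < (v *m A *m v^T) 0 0.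

(* Main.v *)
Require Import Defs.
From mathcomp Require Import all_boot all_algebra.
From mathcomp Require Import all_classical all_reals all_analysis.
From mathcomp Require Import complex.
Import GRing.Theory Num.Theory.
From mathcomp Require Import all_order.
Import Order.TTheory.
Set Implicit Arguments. Unset Strict Implicit. Unset Printing Implicit Defensive.
Local Open Scope ring_scope.

Lemma eig_cplx (R : rcfType) n (A : 'M[R]_n) (r : R) :
  eigenvalue (map_mx (real_complex R) A) (r%:C)%C = eigenvalue A r.
Proof. by rewrite !eigenvalue_root_char -map_char_poly fmorph_root. Qed.

Lemma herm_pos (R : rcfType) n (A : 'M[R]_n) : A^T = A ->
  (forall r, eigenvalue A r -> 0 < r) ->
  forall v : 'rV[R[i]]_n, v != 0 ->
  0 < (v *m map_mx (real_complex R) A *m (map_mx Num.conj v)^T) 0 0.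
Proof.
move=> Asym Apos v v0.
set Ac := map_mx (real_complex R) A.
have Areal : Ac \is a mxOver Num.real.
  by apply/mxOverP => i j; rewrite mxE; apply/complex_realP; eexists.
have herm : Ac \is hermsymmx.
  apply: realsym_hermsym => //; apply/is_hermitianmxP.
  by rewrite expr0 scale1r map_mx_id // /Ac map_trmx Asym.
have /orthomx_spectralP eqA := hermitian_normalmx herm.
have Xreal := hermitian_spectral_diag_real herm.
set U := spectralmx Ac in eqA; set X := spectral_diag Ac in eqA Xreal.
have Uu : U \is unitarymx := spectral_unitarymx Ac.
have Uunit : U \in unitmx := spectral_unit Ac.
have Xpos : forall j, 0 < X 0 j.
  move=> j.
  have UA : U *m Ac = diag_mx X *m U by rewrite {1}eqA !mulmxA mulmxV // mul1mx.
  have ev : row j U *m Ac = X 0 j *: row j U.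
    by rewrite -row_mul UA row_mul row_diag_mx -scalemxAl -rowE.
  have rj0 : row j U != 0.
    apply/eqP => rj; move/unitarymxP: Uu => /(congr1 (row j)).
    rewrite row_mul rj mul0mx => /rowP /(_ j); rewrite !mxE eqxx /=.
    by move=> /eqP; rewrite eq_sym oner_eq0.
  have eX : eigenvalue Ac (X 0 j) by apply/eigenvalueP; exists (row j U).
  have /mxOverP /(_ 0 j) Xr := Xreal.
  rewrite -(RRe_real Xr) in eX *.
  by rewrite ltcR; apply: Apos; rewrite -eig_cplx.
set w := v *m map_mx Num.conj (U^T).
have w0 : w != 0.
  apply: contra v0 => /eqP w0; apply/eqP.
  have : w *m U = v by rewrite /w -mulmxA -invmx_unitary // mulVmx // mulmx1.
  by rewrite w0 mul0mx => <-.
have -> : v *m Ac *m (map_mx Num.conj v)^T = w *m diag_mx X *m (map_mx Num.conj w)^T.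
  have -> : (map_mx Num.conj w)^T = U *m (map_mx Num.conj v)^T.
    rewrite /w map_mxM trmx_mul; congr (_ *m _).
    by apply/matrixP => a b; rewrite !mxE; apply: conjCK.
  by rewrite {1}eqA invmx_unitary // /w !mulmxA.
clearbody w; rewrite mul_mx_diag mxE.
have [j wj] : exists j, w 0 j != 0.
  case: (pickP (fun j => w 0 j != 0)) => [j Hj|H]; first by exists j.
  have : w = 0.
    by apply/rowP => i; rewrite [RHS]mxE; move: (H i) => /= /negbFE/eqP.
  by move=> w00; rewrite w00 eqxx in w0.
rewrite (bigD1 j) //= ltr_wpDr //.
  apply: sumr_ge0 => i _; rewrite !mxE mulrAC; apply: mulr_ge0.
    by apply: mul_conjC_ge0.
  exact: ltW.
by rewrite !mxE mulrAC mulr_gt0 // mul_conjC_gt0.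
Qed.

Lemma diff_comb (R : realType) (V W : normedModType R) k (c : 'I_k -> R)
  (g : 'I_k -> V -> W) u : (forall i, differentiable (g i) u) ->
  forall s : seq 'I_k,
  differentiable (fun v => \sum_(i <- s) c i *: g i v) u /\
  forall w, 'd (fun v => \sum_(i <- s) c i *: g i v) u w = \sum_(i <- s) c i *: 'd (g i) u w.
Proof.
move=> dg; elim => [|i s [IHd IHe]].

have -> : (fun v => \sum_(i <- [::]) c i *: g i v) = (fun _ => 0 : W).
by apply/funext => v; rewrite big_nil.
split; first exact: (differentiable_cst (0 : W) u).
by move=> w; rewrite big_nil (diff_cst (0 : W) u).
have -> : (fun v => \sum_(j <- i :: s) c j *: g j v) =
 ((c i *: g i) + (fun v => \sum_(j <- s) c j *: g j v)).
by apply/funext => v; rewrite big_cons.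
split; first exact: (differentiableD (differentiableZ (c i) (dg i)) IHd).
move=> w; rewrite (diffD (differentiableZ (c i) (dg i)) IHd).
rewrite (diffZ (c i) (dg i)).
rewrite big_cons -IHe.
by [].
Qed.

Lemma jac_comb (R : realType) n k (c : 'I_k -> R) (g : 'I_k -> 'rV[R]_n -> 'rV[R]_n) u :
  (forall i, differentiable (g i) u) ->
  Jac (fun v => \sum_(i < k) c i *: g i v) u = \sum_(i < k) c i *: Jac (g i) u.
Proof.
move=> dg.
have H := diff_comb c dg (index_enum 'I_k).
rewrite /Jac.
have -> : \sum_(i < k) c i *: (jacobian (g i) u)^T = (\sum_(i < k) c i *: jacobian (g i) u)^T.
  by rewrite linear_sum; apply: eq_bigr => i _; rewrite linearZ.
congr (_^T).
apply/row_matrixP => a; rewrite !rowE /jacobian mul_rV_lin1 mulmx_sumr.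
rewrite H.2; apply: eq_bigr => i _.
by rewrite -scalemxAr mul_rV_lin1.
Qed.

Lemma jac_id (R : realType) n (u : 'rV[R]_n) : Jac id u = 1%:M.
Proof.
rewrite /Jac /jacobian; apply/matrixP => a b.
rewrite !mxE diff_val mxE eqxx.
by [].
Qed.

Lemma key_id (R : comNzRingType) n k (a : 'I_k -> R) (A0 J : 'M[R]_n) (Ji : 'I_k -> 'M[R]_n) :
  A0^T = A0 -> (A0 *m J)^T = A0 *m J -> \sum_(i < k) Ji i = 1%:M ->
  \sum_(i < k) a i *: Ji i = J ->
  A0 *m (\sum_(i < k) a i ^+ 2 *: Ji i - J *m J) =
  \sum_(i < k) ((a i)%:M - J)^T *m (A0 *m Ji i) *m ((a i)%:M - J).
Proof.
move=> A0s Ks s1 sa.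
have E : forall i, ((a i)%:M - J)^T *m (A0 *m Ji i) *m ((a i)%:M - J) =
   A0 *m (a i ^+ 2 *: Ji i) - (A0 *m (a i *: Ji i)) *m J
   - J^T *m A0 *m (a i *: Ji i) + J^T *m A0 *m Ji i *m J.
  move=> i; have -> : ((a i)%:M - J)^T = (a i)%:M - J^T by rewrite raddfB /= tr_scalar_mx.
  rewrite mulmxBl mul_scalar_mx !mulmxBr !mul_mx_scalar.
  rewrite scalerBr scalerA -expr2 mulmxBl -!scalemxAl -!scalemxAr !mulmxA.
  rewrite opprB addrA -scalemxAl addrAC; congr (_ + _); exact: addrAC.
rewrite (eq_bigr _ (fun i _ => E i)) !big_split /= !sumrN.
rewrite -!mulmx_sumr -!mulmx_suml -!mulmx_sumr sa s1 mulmx1.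
have JA : J^T *m A0 = A0 *m J by rewrite -Ks trmx_mul A0s.
rewrite JA mulmxBr mulmxA.
by rewrite subrK.
Qed.

Lemma sum_pos (R : rcfType) n k (T S : 'I_k -> 'M[R]_n) (i0 : 'I_k) :
  (forall i (y : 'rV[R]_n), y != 0 -> 0 < (y *m S i *m y^T) 0 0) ->
  (forall x : 'rV[R]_n, x != 0 -> x *m (T i0)^T != 0) ->
  forall x : 'rV[R]_n, x != 0 ->
  0 < (x *m (\sum_(i < k) (T i)^T *m S i *m T i) *m x^T) 0 0.
Proof.
move=> Spos Ti0 x x0.
rewrite mulmx_sumr mulmx_suml summxE.
have E : forall i, (x *m ((T i)^T *m S i *m T i) *m x^T) 0 0 =
   ((x *m (T i)^T) *m S i *m (x *m (T i)^T)^T) 0 0.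
  by move=> i; rewrite trmx_mul trmxK !mulmxA.
have ge0 : forall i, 0 <= (x *m ((T i)^T *m S i *m T i) *m x^T) 0 0.
  move=> i; rewrite E; have [->|y0] := eqVneq (x *m (T i)^T) 0.
    by rewrite !mul0mx mxE.
  exact/ltW/Spos.
rewrite (bigD1 i0) //= ltr_wpDr //; first by apply: sumr_ge0 => i _; apply: ge0.
by rewrite E; apply: Spos; apply: Ti0.
Qed.

Lemma eig_pos_of_pd (R : rcfType) n (G : 'M[R]_n) :
  (forall x : 'rV[R]_n, x != 0 -> 0 < (x *m G *m x^T) 0 0) ->
  forall r, eigenvalue G r -> 0 < r.
Proof.
move=> Gpos r /eigenvalueP [x xE x0].
have := Gpos x x0; rewrite xE -scalemxAl mxE.
have q0 : 0 <= (x *m x^T) 0 0.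
  by rewrite mxE; apply: sumr_ge0 => j _; rewrite mxE -expr2 sqr_ge0.
rewrite ltNge => H; rewrite ltNge; apply/negP => r0; move/negP: H; apply.
exact: mulr_le0_ge0.
Qed.

Lemma unit_of_pd (R : rcfType) n (G : 'M[R]_n) :
  (forall x : 'rV[R]_n, x != 0 -> 0 < (x *m G *m x^T) 0 0) -> G \in unitmx.
Proof.
move=> Gpos; rewrite unitmxE unitfE; apply/negP => /det0P [v v0 vG].
by have := Gpos v v0; rewrite vG mul0mx mxE ltxx.
Qed.

Lemma cplx_real (R : rcfType) (x : R) : Num.conj (x%:C)%C = (x%:C)%C.
Proof. by apply: conj_Creal; apply/complex_realP; exists x. Qed.

Local Notation c := (map_mx (real_complex _)).

Lemma final (R : rcfType) n (D A0 B : 'M[R]_n) (omega : R) (z : R[i]) :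
  A0^T = A0 -> A0 \in unitmx -> B \in unitmx ->
  (forall v : 'rV[R[i]]_n, v != 0 ->
     0 < (v *m map_mx (real_complex R) (A0 *m B) *m (map_mx Num.conj v)^T) 0 0) ->
  (forall v : 'rV[R[i]]_n, v != 0 ->
     0 < (v *m map_mx (real_complex R) (D *m invmx A0) *m (map_mx Num.conj v)^T) 0 0) ->
  0 < omega ->
  eigenvalue (map_mx (real_complex R) (omega^-1 *: (D *m invmx B))) z -> 0 <= z.
Proof.
move=> A0s A0u Bu Gpos Ppos om0 /eigenvalueP [v vE v0].
have cA0u : c A0 \in unitmx by rewrite map_unitmx.
have cBu : c B \in unitmx by rewrite map_unitmx.
set lam := ((omega%:C)%C * z).
have om0' : 0 < (omega%:C)%C by rewrite ltcR.
have vM : v *m (c D *m invmx (c B)) = lam *: v.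
  move: vE; rewrite map_mxZ map_mxM map_invmx -scalemxAr => vE.
  by rewrite /lam -scalerA -vE scalerA rmorphV ?unitfE ?gt_eqF // mulfV ?gt_eqF // scale1r.
set y := v *m c D *m invmx (c B) *m invmx (c A0).
have yA : y *m c A0 = lam *: v by rewrite /y mulmxKV // -mulmxA.
have yG : y *m c (A0 *m B) = v *m c D.
  by rewrite map_mxM mulmxA yA -vM mulmxA mulmxKV.
have cP : c (D *m invmx A0) *m c A0 = c D by rewrite map_mxM map_invmx mulmxKV.
have cA0c : c A0 *m (map_mx Num.conj y)^T = Num.conj lam *: (map_mx Num.conj v)^T.
  have -> : c A0 = (map_mx Num.conj (c A0))^T.
    apply/matrixP => i j; rewrite !mxE cplx_real.
    by move/matrixP: A0s => /(_ j i); rewrite !mxE => ->.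
  by rewrite -trmx_mul -map_mxM yA map_mxZ -linearZ.
have key : (y *m c (A0 *m B) *m (map_mx Num.conj y)^T) 0 0 =
  Num.conj lam * (v *m c (D *m invmx A0) *m (map_mx Num.conj v)^T) 0 0.
  by rewrite yG -cP mulmxA -(mulmxA _ (c A0)) cA0c -scalemxAr mxE.
have [y0|y0] := eqVneq y 0.
  move: yA; rewrite y0 mul0mx => /esym/eqP; rewrite scaler_eq0 (negbTE v0) orbF.
  rewrite /lam mulf_eq0 gt_eqF //= => /eqP ->; exact: lexx.
have lpos : 0 < Num.conj lam.
  have := Gpos y y0; rewrite key => H.
  by rewrite -(pmulr_lgt0 _ (Ppos v v0)).
have lpos' : 0 < lam.
  by rewrite -[lam]conjCK conj_Creal ?gtr0_real.
have -> : z = lam / (omega%:C)%C by rewrite /lam mulrAC mulfV ?gt_eqF // mul1r.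
by apply: ltW; apply: divr_gt0.
Qed.

Theorem corollary2 (R : realType) (p k : nat) (hp : (0 < p)%N) (hk : (0 < k)%N)
  (a : 'I_k -> R) (f : 'rV[R]_p -> 'rV[R]_p) (M : 'I_k -> 'rV[R]_p -> 'rV[R]_p)
  (f_diff : forall v, differentiable f v)
  (M_diff : forall i v, differentiable (M i) v)
  (hsum : forall v, \sum_(i < k) M i v = v)
  (hflux : forall v, \sum_(i < k) a i *: M i v = f v)
  (u : 'rV[R]_p) (A0 : 'M[R]_p)
  (hA0 : spd A0)
  (h1 : (A0 *m Jac f u)^T = A0 *m Jac f u)
  (h2 : forall i, spd (A0 *m Jac (M i) u))
  (h3 : forall (i : 'I_k) (z : R[i]), eigenvalue (cplx_mx (Jac f u)) z ->
          `|z| < (`|a i|)%:C%C)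
  (D : 'M[R]_p)
  (hDsym : (D *m invmx A0)^T = D *m invmx A0)
  (hDpos : forall x : R, eigenvalue (D *m invmx A0) x -> 0 < x)
  (eps omega : R) (heps : 0 < eps) (homega : 0 < omega)
  (Omega : 'M[R]_p) (hOmega : Omega \in unitmx)
  (hdef : (eps * omega) *: invmx Omega =
          D *m invmx (Jac (fun v => \sum_(i < k) (a i ^+ 2) *: M i v) u
                      - Jac f u *m Jac f u)) :
  forall z : R[i], eigenvalue (cplx_mx (eps *: invmx Omega)) z -> 0 <= z.
Proof.
have ceq : forall A : 'M[R]_p, cplx_mx A = map_mx (real_complex R) A := fun A => erefl.
move: h3; rewrite ceq => h3 z; rewrite ceq.
have [A0s A0pd] := hA0.
have A0u : A0 \in unitmx := unit_of_pd A0pd.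
have hJsum : \sum_(i < k) Jac (M i) u = 1%:M.
  have := jac_comb (fun _ => 1) (fun i => M_diff i u).
  have -> : (fun v => \sum_(i < k) (fun _ => (1 : R)) i *: M i v) = id.
    apply/funext => v; transitivity (\sum_(i < k) M i v); last exact: hsum.
    by apply: eq_bigr => i _; exact: scale1r.
  rewrite jac_id => ->; by apply: eq_bigr => i _; rewrite scale1r.
have hJf : \sum_(i < k) a i *: Jac (M i) u = Jac f u.
  have := jac_comb a (fun i => M_diff i u).
  have -> : (fun v => \sum_(i < k) a i *: M i v) = f by apply/funext => v; rewrite hflux.
  by move=> <-.
rewrite (jac_comb (fun i => a i ^+ 2) (fun i => M_diff i u)) in hdef.
set J := Jac f u in h1 h3 hJf hdef.
set B := \sum_(i < k) a i ^+ 2 *: Jac (M i) u - J *m J in hdef.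
have Gid := key_id A0s h1 hJsum hJf.
rewrite -/B in Gid.
pose i0 := Ordinal hk.
have Ti0 : forall x : 'rV[R]_p, x != 0 -> x *m ((a i0)%:M - J)^T != 0.
  move=> x x0; apply/negP => /eqP xT.
  have nu : ((a i0)%:M - J) \notin unitmx.
    rewrite -unitmx_tr; apply/negP => U.
    by move/eqP: x0; apply; rewrite -(mulmxK U x) xT mul0mx.
  move: nu; rewrite unitmxE unitfE negbK => /det0P [y y0 yE].
  have ev : eigenvalue J (a i0).
    apply/eigenvalueP; exists y => //.
    by move/eqP: yE; rewrite mulmxBr mul_mx_scalar subr_eq0 => /eqP <-.
  rewrite -eig_cplx in ev; have := h3 i0 _ ev.
  have := normc_ge_Re ((a i0)%:C)%C => /= H1 H2.
  by have := le_lt_trans H1 H2; rewrite ltxx.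
have Spos : forall i (y : 'rV[R]_p), y != 0 -> 0 < (y *m (A0 *m Jac (M i) u) *m y^T) 0 0.
  by move=> i; case: (h2 i).
have Gpd := @sum_pos R p k (fun i => (a i)%:M - J) (fun i => A0 *m Jac (M i) u) i0 Spos Ti0.
rewrite -Gid in Gpd.
have Gsym : (A0 *m B)^T = A0 *m B.
  rewrite Gid linear_sum; apply: eq_bigr => i _ /=.
  by rewrite trmx_mul trmx_mul trmxK (h2 i).1 mulmxA.
have Gc := herm_pos Gsym (eig_pos_of_pd Gpd).
have Pc := herm_pos hDsym hDpos.
have Bu : B \in unitmx.
  by have := unit_of_pd Gpd; rewrite unitmx_mul => /andP [].
have E : eps *: invmx Omega = omega^-1 *: (D *m invmx B).
  by rewrite -hdef scalerA mulrCA mulVf ?gt_eqF // mulr1.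
rewrite E; exact: final A0s A0u Bu Gc Pc homega.
Qed.
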